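(* Let $T$ be a tree and let $G$ be the simple graph obtained from the disjoint union of $T$ and an isolated vertex $u^*$ by adding $t$ edges joining $u^*$ to $t$ distinct vertices of $T$, where $1\le t\le v(T)$. Then $\phi(G)=\lfloor t/2\rfloor$.
   Context: $v(T)$ is the number of vertices of $T$. For a graph $G$, $\phi(G)$ is the maximum number of pairwise edge-disjoint cycles in $G$. *)

(* Defs.v *)
From mathcomp Require Import all_boot.
Set Implicit Arguments. Unset Strict Implicit. Unset Printing Implicit Defensive.

Section Graphs.
Variable V : finType.

Definition simple_graph (e : rel V) : Prop :=
  symmetric e /\ irreflexive e.

Definition is_cycle (e : rel V) (c : seq V) : bool :=
  [&& 2 < size c, uniq c & cycle e c].

Definition cycle_edges (c : seq V) : seq {set V} :=
  [seq [set p.1; p.2] | p <- zip c (rot 1 c)].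

Definition edge_disjoint (c1 c2 : seq V) : bool :=
  ~~ has (fun E => E \in cycle_edges c2) (cycle_edges c1).

Definition cycle_packing (e : rel V) (cs : seq (seq V)) : Prop :=
  all (is_cycle e) cs /\
  forall i j, i < size cs -> j < size cs -> i != j ->
    edge_disjoint (nth [::] cs i) (nth [::] cs j).

Definition phi_is (e : rel V) (n : nat) : Prop :=
  (exists cs, cycle_packing e cs /\ size cs = n) /\
  (forall cs, cycle_packing e cs -> size cs <= n).

Definition is_tree (e : rel V) : Prop :=
  simple_graph e /\ 0 < #|V| /\ (forall x y, connect e x y) /\
  (forall c, ~~ is_cycle e c).

End Graphs.

(* G = T + isolated vertex u* (= None), joined to the vertices of S. *)
Definition add_apex (V : finType) (eT : rel V) (S : {set V}) : rel (option V) :=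
  fun a b => match a, b with
  | Some x, Some y => eT x y
  | None, Some y => y \in S
  | Some x, None => x \in S
  | None, None => false
  end.

(* Main.v *)
Require Import Defs.
From mathcomp Require Import all_boot.
From mathcomp Require Import zify.
From Stdlib Require Import Classical.
Set Implicit Arguments. Unset Strict Implicit. Unset Printing Implicit Defensive.

Section Gen.
Variable T : eqType.

Lemma zip_cons_rcons (x z : T) s :
  zip (x :: s) (rcons s z) = rcons (zip (x :: s) s) (last x s, z).
Proof. by elim: s x => [|a s IH] x //=; rewrite IH. Qed.

Lemma drop_zip (s t : seq T) i : drop i (zip s t) = zip (drop i s) (drop i t).
Proof. elim: s t i => [|a s IH] [|b t] [|i] //=; by [case: (drop _ _) | rewrite IH]. Qed.

Lemma take_zip (s t : seq T) i : take i (zip s t) = zip (take i s) (take i t).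
Proof. elim: s t i => [|a s IH] [|b t] [|i] //=; by [case: (take _ _) | rewrite IH]. Qed.

Lemma rot_zip (s t : seq T) i : size s = size t ->
  rot i (zip s t) = zip (rot i s) (rot i t).
Proof.
move=> Hs; rewrite /rot drop_zip take_zip zip_cat //.
by rewrite !size_drop Hs.
Qed.

Lemma set2_eq (u v u' v' : T) (A : finType) (f : T -> A) : False -> True.
Proof. by []. Qed.

Lemma head_cat_cons (x0 x : T) p r : head x0 (p ++ x :: r) = head x p.
Proof. by case: p. Qed.

Lemma last_cat_cons (x0 y : T) p r : last x0 (p ++ y :: r) = last y r.
Proof. by rewrite last_cat. Qed.

Lemma last_rev' (x : T) q : last x (rev q) = head x q.
Proof. by case: q => // a q; rewrite rev_cons last_rcons. Qed.

Lemma head_rev' (x : T) q : head x (rev q) = last x q.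
Proof. by rewrite -[in RHS](revK q) last_rev'. Qed.

Lemma consec_split (w : seq T) x y : (x, y) \in zip w (behead w) ->
  exists p1 p2, w = p1 ++ x :: y :: p2.
Proof.
elim: w => [|a w IH] //; case: w IH => [|b w] IH //=.
rewrite inE => /orP [/eqP [-> ->] | /IH [p1 [p2 E]]]; first by exists [::], w.
by exists (a :: p1), p2; rewrite E.
Qed.

Lemma nonuniq_split (w : seq T) : ~~ uniq w ->
  exists p1 x p2 p3, w = p1 ++ x :: p2 ++ x :: p3.
Proof.
elim: w => [|a w IH] //=; rewrite negb_and negbK => /orP [aw | /IH [p1 [x [p2 [p3 E]]]]].
  by case/splitPr: aw => p2 p3; exists [::], a, p2, p3.
by exists (a :: p1), x, p2, p3; rewrite E.
Qed.

Lemma nth_perm2 (x0 : T) (s : seq T) i j : i < size s -> j < size s -> i != j ->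
  exists rest, perm_eq s (nth x0 s i :: nth x0 s j :: rest).
Proof.
elim: s i j => [|a s IH] [|i] [|j] //=.
- move=> _ Hj _; have := mem_nth x0 Hj => /perm_to_rem P.
  by exists (rem (nth x0 s j) s); rewrite perm_cons.
- move=> Hi _ _; have := mem_nth x0 Hi => /perm_to_rem P.
  exists (rem (nth x0 s i) s); apply: (@perm_trans _ (a :: nth x0 s i :: rem (nth x0 s i) s)).
    by rewrite perm_cons.
  exact/permPl/(perm_catCA [:: a] [:: nth x0 s i]).
- move=> Hi Hj Hij; have [r P] := IH i j Hi Hj Hij.
  exists (a :: r); apply: (@perm_trans _ (a :: nth x0 s i :: nth x0 s j :: r)).
    by rewrite perm_cons.
  exact/permPl/(perm_catCA [:: a] [:: nth x0 s i; nth x0 s j]).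
Qed.

End Gen.

Lemma set2_inj (T : finType) (u v u' v' : T) :
  [set u; v] = [set u'; v'] -> (u = u' /\ v = v') \/ (u = v' /\ v = u').
Proof.
move=> E.
have hu : u \in [set u'; v'] by rewrite -E !inE eqxx.
have hv : v \in [set u'; v'] by rewrite -E !inE eqxx orbT.
have hu' : u' \in [set u; v] by rewrite E !inE eqxx.
have hv' : v' \in [set u; v] by rewrite E !inE eqxx orbT.
move: hu hv hu' hv'; rewrite !inE.
by do 4 (case/orP => /eqP ?); subst; auto.
Qed.

Section Gen2.
Variable T : finType.
Variable r : rel T.

Lemma zip_adj p x y u v : path r x (rcons p y) -> (u, v) \in zip (x :: p) (rcons p y) -> r u v.
Proof.
elim: p x => [|a p IH] x /=; first by rewrite andbT inE => rxy /eqP [-> ->].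
case/andP => rxa pa; rewrite inE => /orP [/eqP [-> ->] // | ]; exact: IH.
Qed.

Lemma cycle_zip_adj c u v : cycle r c -> (u, v) \in zip c (rot 1 c) -> r u v.
Proof. by case: c => // x p; rewrite rot1_cons; apply: zip_adj. Qed.

Lemma edges_rot (c : seq T) i E : (E \in cycle_edges (rot i c)) = (E \in cycle_edges c).
Proof. by rewrite /cycle_edges rot_rot -rot_zip ?size_rot // map_rot mem_rot. Qed.

End Gen2.

Lemma path_Some (V : finType) (e : rel V) S x p :
  path (add_apex e S) (Some x) (map Some p) = path e x p.
Proof. by elim: p x => //= a p IH x; rewrite IH. Qed.

Lemma cycle_mapSome (V : finType) (e : rel V) S c :
  cycle (add_apex e S) (map Some c) = cycle e c.
Proof. by case: c => //= x p; rewrite -map_rcons path_Some. Qed.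

Lemma zip_mapS (V : Type) (s t : seq V) :
  zip (map Some s) (map Some t) = map (fun q => (Some q.1, Some q.2)) (zip s t).
Proof. by elim: s t => [|a s IH] [|b t] //=; rewrite IH. Qed.

Section Lower.
Variables (V : finType) (e : rel V) (esy : symmetric e) (S : {set V}) (x0 : V).

Definition walkok (w : seq V) := (w != [::]) && sorted e w.
Definition ends (ws : seq (seq V)) := flatten [seq [:: head x0 w; last x0 w] | w <- ws].
Definition link ws := [&& all walkok ws, uniq (ends ws) & all (fun v => v \in S) (ends ws)].
Definition meas (ws : seq (seq V)) := sumn (map size ws).
Definition consec (w : seq V) := zip w (behead w).
Definition bad ws :=
  (exists w rest, perm_eq ws (w :: rest) /\ ~~ uniq w) \/
  (exists w1 w2 rest x y, perm_eq ws (w1 :: w2 :: rest) /\ (x, y) \in consec w1 /\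
     ((x, y) \in consec w2 \/ (y, x) \in consec w2)).

Lemma link_perm ws ws' : perm_eq ws ws' -> link ws = link ws'.
Proof.
move=> P; rewrite /link (perm_all _ P).
have PE : perm_eq (ends ws) (ends ws') by apply/perm_flatten/perm_map.
by rewrite (perm_uniq PE) (perm_all _ PE).
Qed.

Lemma meas_perm ws ws' : perm_eq ws ws' -> meas ws = meas ws'.
Proof. by move=> P; apply/perm_sumn/perm_map. Qed.

Lemma sorted_split s1 x s2 : sorted e (s1 ++ x :: s2) -> sorted e (s1 ++ [:: x]) /\ sorted e (x :: s2).
Proof. by rewrite sorted_cat_cons -cats1 => /andP[]. Qed.

Lemma sorted_glue s1 x s2 : sorted e (s1 ++ [:: x]) -> sorted e (x :: s2) -> sorted e (s1 ++ x :: s2).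
Proof. by move=> h1 h2; rewrite sorted_cat_cons -cats1 h1. Qed.

Lemma sorted_split2 p x y r : sorted e (p ++ x :: y :: r) -> sorted e (p ++ [:: x]) /\ sorted e (y :: r).
Proof. by case/sorted_split => -> /= /andP[]. Qed.

Lemma sorted_rev s : sorted e (rev s) = sorted e s.
Proof.
rewrite rev_sorted; case: s => //= x p; apply: eq_path => a b; exact: esy.
Qed.

Lemma link_replace1 w w' rest : link (w :: rest) -> walkok w' ->
  head x0 w' = head x0 w -> last x0 w' = last x0 w -> link (w' :: rest).
Proof.
rewrite /link /ends /= => /and3P[/andP[_ ->] U A] -> -> ->.
by rewrite U A.
Qed.

Lemma link_replace2 w1 w2 w1' w2' rest : link (w1 :: w2 :: rest) -> walkok w1' -> walkok w2' ->
  perm_eq [:: head x0 w1'; last x0 w1'; head x0 w2'; last x0 w2']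
          [:: head x0 w1; last x0 w1; head x0 w2; last x0 w2] ->
  link (w1' :: w2' :: rest).
Proof.
move=> L o1 o2 P.
have PE : perm_eq (ends (w1' :: w2' :: rest)) (ends (w1 :: w2 :: rest)).
  change (perm_eq ([:: head x0 w1'; last x0 w1'; head x0 w2'; last x0 w2'] ++ ends rest)
    ([:: head x0 w1; last x0 w1; head x0 w2; last x0 w2] ++ ends rest)).
  by rewrite perm_cat2r.
move: L; rewrite /link (perm_uniq PE) (perm_all _ PE) /= o1 o2 /=.
by case/and3P => /and3P[_ _ ->] -> ->.
Qed.


Lemma improve ws : link ws -> bad ws ->
  exists ws', [/\ link ws', size ws' = size ws & meas ws' < meas ws].
Proof.
move=> L [[w [rest [P nu]]] | [wi [wj [rest [x [y [P [ci cj]]]]]]]].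
- have L' : link (w :: rest) by rewrite -(link_perm P).
  have [p1 [z [p2 [p3 Ew]]]] := nonuniq_split nu.
  have E2 : w = (p1 ++ z :: p2) ++ z :: p3 by rewrite Ew -catA.
  have sw : sorted e w by move: L' => /and3P [/andP [/andP [_ ->] _] _ _].
  exists ((p1 ++ z :: p3) :: rest); split.
  + apply: (link_replace1 L').
    * rewrite /walkok; apply/andP; split; first by case: (p1) {Ew E2}.
      have := sw; rewrite {1}Ew => /sorted_split [s1 _].
      have := sw; rewrite {1}E2 => /sorted_split [_ s2].
      by rewrite sorted_glue.
    * by rewrite Ew !head_cat_cons.
    * by rewrite E2 !last_cat_cons.
  + by rewrite (perm_size P).
  + rewrite (meas_perm P) /meas /= Ew !size_cat /=; do 3 rewrite ?size_cat ?size_rev /=; lia.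
- have L' : link (wi :: wj :: rest) by rewrite -(link_perm P).
  have swi : sorted e wi by move: L' => /and3P [/and3P [/andP [_ ->] _] _ _].
  have swj : sorted e wj by move: L' => /and3P [/and3P [_ /andP [_ ->] _] _ _].
  have [p1 [p2 Ei]] := consec_split ci.
  rewrite Ei in swi.
  have [si1 si2] := sorted_split2 swi.
  case: cj => cj; have [q1 [q2 Ej]] := consec_split cj; rewrite Ej in swj;
    have [sj1 sj2] := sorted_split2 swj.
  + exists ((p1 ++ x :: rev q1) :: (rev p2 ++ y :: q2) :: rest); split.
    * apply: (link_replace2 L').
      - rewrite /walkok; apply/andP; split; first by case: (p1).
        by rewrite sorted_glue // -rev_rcons sorted_rev -cats1.
      - rewrite /walkok; apply/andP; split; first by case: (rev p2).
        by rewrite sorted_glue // cats1 -rev_cons sorted_rev.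
      - rewrite Ei Ej !head_cat_cons !last_cat_cons head_rev' last_rev' /=.
        rewrite perm_cons; exact/permPl/(perm_catCA [:: head x q1] [:: last y p2] [:: last y q2]).
    * by rewrite (perm_size P).
    * rewrite (meas_perm P) /meas /= Ei Ej ; do 3 rewrite ?size_cat ?size_rev /=; lia.
  + exists ((p1 ++ x :: q2) :: (q1 ++ y :: p2) :: rest); split.
    * apply: (link_replace2 L').
      - rewrite /walkok; apply/andP; split; first by case: (p1).
        by rewrite sorted_glue.
      - rewrite /walkok; apply/andP; split; first by case: (q1).
        by rewrite sorted_glue.
      - rewrite Ei Ej !head_cat_cons !last_cat_cons /=.
        rewrite perm_cons; exact/permPl/(perm_rev [:: last y p2; head y q1; last x q2]).
    * by rewrite (perm_size P).
    * rewrite (meas_perm P) /meas /= Ei Ej; do 3 rewrite ?size_cat ?size_rev /=; lia.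
Qed.

Lemma good_exists n ws : meas ws <= n -> link ws ->
  exists ws', [/\ link ws', size ws' = size ws & ~ bad ws'].
Proof.
elim: n ws => [|n IH] ws Hm L; case: (classic (bad ws)) => B; try by exists ws.
- by have [ws' [_ _ lt]] := improve L B; lia.
- have [ws' [L' s' lt]] := improve L B.
  have [ws'' [L'' s'' B'']] := IH ws' ltac:(lia) L'.
  by exists ws''; split => //; rewrite s'' s'.
Qed.

Lemma init (conn : forall x y, connect e x y) n s : size s <= n -> uniq s -> {subset s <= S} ->
  exists ws, [/\ all walkok ws, uniq (ends ws), {subset ends ws <= s} & size ws = (size s)./2].
Proof.
elim: n s => [|n IH] [|a [|b s]] //= Hs U Sub; try by exists [::].
move: U => /and3P [ab bs us].
have Hs2 : size s <= n by move: Hs; rewrite ltnS => /ltnW.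
have [ws' [ok' u' sub' sz']] := IH s Hs2 us (fun z zs => Sub z ltac:(by rewrite !inE zs !orbT)).
have /connectP [p pp Eb] := conn a b.
exists ((a :: p) :: ws'); split => //=.
- by rewrite ok' andbT /walkok /= pp.
- rewrite -Eb u' andbT inE negb_or.
  rewrite inE negb_or in ab; case/andP: ab => -> ab /=.
  apply/andP; split; apply/negP => /sub' H; [by rewrite H in ab | by rewrite H in bs].
- move=> z; rewrite /ends /= -/(ends ws') -Eb !inE => /orP [-> // | /orP [-> | /sub' ->]]; by rewrite ?orbT.
- by rewrite sz'.
Qed.

Definition cyc (w : seq V) : seq (option V) := None :: map Some w.

Lemma cyc_edges w E : w != [::] -> E \in cycle_edges (cyc w) ->
  (exists2 v, v \in [:: head x0 w; last x0 w] & E = [set None; Some v]) \/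
  (exists x y, (x, y) \in consec w /\ E = [set Some x; Some y]).
Proof.
case: w => // a p _.
rewrite /cycle_edges /cyc rot1_cons zip_cons_rcons.
case/mapP => [[u v]]; rewrite mem_rcons in_cons => /orP [/eqP [-> ->] -> | ].
  by left; exists (last a p); rewrite ?inE ?eqxx ?orbT // last_map setUC.
rewrite /= in_cons => /orP [/eqP [-> ->] -> | ].
  by left; exists a; rewrite ?inE ?eqxx.
rewrite -[Some a :: map Some p]/(map Some (a :: p)) zip_mapS.
case/mapP => [[x y]] xy [-> ->] ->; right; exists x, y; split => //.
Qed.

Lemma cyc_cycle w : walkok w -> uniq w -> head x0 w != last x0 w ->
  head x0 w \in S -> last x0 w \in S -> is_cycle (add_apex e S) (cyc w).
Proof.
case: w => // a p /andP [_ sw] U /= hl ha hb.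
rewrite /is_cycle /cyc; apply/and3P; split.
- by case: p hl {sw U hb} => [|? ?] /=; rewrite ?eqxx.
- change (uniq (None :: map Some (a :: p))).
  rewrite cons_uniq (map_inj_uniq (@Some_inj _)) U andbT.
  by apply/negP => /mapP [].
- rewrite /= rcons_path path_Some last_map /=.
  by rewrite ha hb; rewrite /sorted in sw; rewrite sw.
Qed.

Lemma uniq4 (T : eqType) (a b c d v : T) r : uniq (a :: b :: c :: d :: r) ->
  v \in [:: a; b] -> v \in [:: c; d] -> False.
Proof.
rewrite -[a :: b :: _]/([:: a; b] ++ c :: d :: r) cat_uniq => /and3P [_ /hasP H _] Hv Hv'.
apply: H; exists v => //; move: Hv'; rewrite !inE => /orP [] ->; by rewrite ?orbT.
Qed.

Lemma link_head w rest : link (w :: rest) ->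
  [/\ walkok w, head x0 w != last x0 w, head x0 w \in S & last x0 w \in S].
Proof.
rewrite /link /ends /= => /and3P [/andP [ok _] /andP [hn _] /and3P [hs ls _]].
by split => //; move: hn; rewrite inE negb_or => /andP [].
Qed.

Lemma packing ws : link ws -> ~ bad ws -> cycle_packing (add_apex e S) (map cyc ws).
Proof.
move=> L B; split.
- apply/allP => c /mapP [w wi ->].
  have P := perm_to_rem wi.
  have L' : link (w :: rem w ws) by rewrite -(link_perm P).
  have [ok hl hs ls] := link_head L'.
  have U : uniq w by case: (boolP (uniq w)) => // nu; exfalso; apply: B; left; exists w, (rem w ws).
  exact: cyc_cycle.
- move=> i j; rewrite size_map => Hi Hj Hij; rewrite !(nth_map [::]) //.
  have [rest P] := nth_perm2 [::] Hi Hj Hij.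
  set wi := nth [::] ws i in P *; set wj := nth [::] ws j in P *.
  have L' : link (wi :: wj :: rest) by rewrite -(link_perm P).
  have [oki _ _ _] := link_head L'.
  have L'' : link (wj :: rest) by move: L'; rewrite /link /ends /= => /and3P [/andP [_ ->] /and3P [_ _ ->] /and3P [_ _ ->]].
  have [okj _ _ _] := link_head L''.
  have Uends : uniq (head x0 wi :: last x0 wi :: head x0 wj :: last x0 wj :: ends rest)
    by case/and3P: L'.
  have nei : wi != [::] by case/andP: oki.
  have nej : wj != [::] by case/andP: okj.
  apply/hasP => [[E Ei Ej]].
  case: (cyc_edges nei Ei) => [[v vi Ev] | [x [y [cxy Ev]]]];
  case: (cyc_edges nej Ej) => [[v' vj Ev'] | [x' [y' [cxy' Ev']]]].
  + have : Some v \in [set None; Some v'] by rewrite -Ev' Ev !inE eqxx orbT.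
    rewrite !inE /= => /eqP [vv]; subst v'.
    exact: (uniq4 Uends vi vj).
  + have : None \in [set Some x'; Some y'] by rewrite -Ev' Ev !inE eqxx.
    by rewrite !inE.
  + have : None \in [set Some x; Some y] by rewrite -Ev Ev' !inE eqxx.
    by rewrite !inE.
  + have := set2_inj (etrans (Logic.eq_sym Ev) Ev').
    move=> H; apply: B; right; exists wi, wj, rest, x, y; split => //; split => //.
    by case: H => [[[->] [->]] | [[->] [->]]]; [left | right].
Qed.

End Lower.

Section Upper.
Variables (V : finType) (e : rel V) (S : {set V}).
Hypothesis acyc : forall c, ~~ is_cycle e c.

Definition Nset (c : seq (option V)) : {set V} := [set s | [set None; Some s] \in cycle_edges c].

Lemma N_sub c : is_cycle (add_apex e S) c -> Nset c \subset S.
Proof.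
case/and3P => _ _ C; apply/subsetP => s; rewrite inE => /mapP [[u v] Huv /= E].
have G := cycle_zip_adj C Huv.
by case: (set2_inj E) => [[? ?] | [? ?]]; subst.
Qed.

Lemma N_card c : is_cycle (add_apex e S) c -> 1 < #|Nset c|.
Proof.
move=> C.
have Hn : None \in c.
  apply/negPn/negP => Hn.
  case: c C Hn => [|u r] C Hn; first by move: C; rewrite /is_cycle.
  case: u C Hn => [x0|] C Hn; last by rewrite inE eqxx in Hn.
  set c0 := map (odflt x0) (Some x0 :: r).
  have Ec : map Some c0 = Some x0 :: r.
    rewrite /c0 -map_comp map_id_in // => z zin /=.
    by case: z zin => // zin; rewrite zin in Hn.
  apply: (negP (acyc c0)).
  by move: C; rewrite /is_cycle -Ec size_map (map_inj_uniq (@Some_inj _)) cycle_mapSome.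
case/rot_to: Hn => i s' Er.
have C' : is_cycle (add_apex e S) (None :: s') by rewrite -Er /is_cycle size_rot rot_uniq rot_cycle.
have Esub : forall E, E \in cycle_edges (None :: s') -> E \in cycle_edges c.
  by move=> E; rewrite -Er edges_rot.
case: s' C' Esub {Er} => [|y [|z s'']] C' Esub; try by move: C'; rewrite /is_cycle.
move: C' => /and3P [_ U _].
set l := last z s''.
have e1 : [set None; y] \in cycle_edges c.
  apply: Esub; rewrite /cycle_edges rot1_cons; apply/mapP; exists (None, y) => //.
  by rewrite /= in_cons eqxx.
have e2 : [set None; l] \in cycle_edges c.
  apply: Esub; rewrite /cycle_edges rot1_cons; apply/mapP; exists (l, None); last by rewrite /= setUC.
  by rewrite zip_cons_rcons mem_rcons in_cons eqxx.
have lin : l \in z :: s'' by apply: mem_last.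
have ny : None \notin y :: z :: s'' by case/andP: U.
have yn : y \notin z :: s'' by case/andP: U => _ /andP [].
clear Esub U; case: y e1 ny yn => [y0|] e1 ny yn; last by rewrite inE eqxx in ny.
case El : l e2 lin => [l0|] e2 lin.
  2: by move: ny; rewrite inE lin orbT.
have : [set y0; l0] \subset Nset c.
  by apply/subsetP => q; rewrite !inE => /orP [] /eqP ->.
move/subset_leq_card; rewrite cards2.
have -> // : y0 != l0.
by apply/eqP => E; move: yn; rewrite E lin.
Qed.

Fixpoint Ncup (cs : seq (seq (option V))) : {set V} :=
  if cs is c :: cs' then Nset c :|: Ncup cs' else set0.

Lemma Ncup_mem s cs : s \in Ncup cs -> exists2 j, j < size cs & s \in Nset (nth [::] cs j).
Proof.
elim: cs => [|c cs IH] /=; first by rewrite inE.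
rewrite inE => /orP [H | /IH [j Hj H]]; first by exists 0.
by exists j.+1.
Qed.

Lemma count_pack cs : cycle_packing (add_apex e S) cs -> 2 * size cs <= #|Ncup cs| /\ Ncup cs \subset S.
Proof.
elim: cs => [|c cs IH] [Hall Hd] /=; first by split => //; apply: sub0set.
move/andP: Hall => [Cc Hall].
have [IH1 IH2] := IH (conj Hall (fun i j Hi Hj Hij => Hd i.+1 j.+1 Hi Hj Hij)).
have D : Nset c :&: Ncup cs = set0.
  apply/setP => s; rewrite !inE; apply/negP => /andP [H1 /Ncup_mem [j Hj H2]].
  have := Hd 0 j.+1 erefl Hj erefl; rewrite /edge_disjoint /= => /hasP; apply.
  by exists [set None; Some s]; rewrite inE in H1 H2.
split; last by rewrite subUset N_sub.
rewrite cardsU D cards0 subn0; move: (N_card Cc) => h; rewrite mulnS; exact: leq_add h IH1.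
Qed.

End Upper.

Theorem lemma2p2 (V : finType) (eT : rel V) (S : {set V}) (t : nat) :
  is_tree eT -> #|S| = t -> 1 <= t -> t <= #|V| ->
  phi_is (add_apex eT S) t./2.
Proof.
move=> [[esy _] [_ [conn acyc]]] HS Ht _.
split.
- have [x0 x0S] : exists x0, x0 \in S by apply/card_gt0P; rewrite HS.
  have subS : {subset enum S <= S} by move=> z; rewrite mem_enum.
  have [ws [ok U sub sz]] := @init V eT S x0 conn _ (enum S) (leqnn _) (enum_uniq _) subS.
  have L : link eT S x0 ws.
    rewrite /link ok U /=; apply/allP => z /sub; by rewrite mem_enum.
  have [ws' [L' Hs' NB]] := good_exists esy (leqnn _) L.
  exists (map (@cyc V) ws'); split; first exact: packing L' NB.
  by rewrite size_map Hs' sz -cardE HS.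
- move=> cs P; have [H1 H2] := count_pack acyc P.
  have := subset_leq_card H2; rewrite HS => H3.
  by rewrite -divn2 leq_divRL // mulnC (leq_trans H1 H3).
Qed.
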